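(* Let $p$ be prime and $H\le\mathrm{S}_n$ be in $\mathfrak{InP}(\mathrm{C}_p)$, with $B,K,\gamma$ as in the context, and let $H^\perp=\gamma^{-1}(\gamma(H)^\perp)$. Let $b\in B$ and $\kappa\in K$. Then $b\kappa\in N_{\mathrm{S}_n}(H)$ if and only if $b^{-1}\kappa\in N_{\mathrm{S}_n}(H^\perp)$.
   Context: $H\le\mathrm{S}_{n}$, $n=pk$, has orbits $\Omega_1,\dots,\Omega_k$ of size $p$ with each $G_i:=H|_{\Omega_i}$ cyclic of order $p$ (regarded as a subgroup of $\mathrm{S}_n$); $G=G_1\times\dots\times G_k$. For a bijection $\varphi:\Omega_1\to\Omega_j$ ($j\neq1$), $\overline\varphi$ is the involution in $\mathrm{Sym}(\Omega_1\cup\Omega_j)$ with $\alpha^{\overline\varphi}=\varphi(\alpha)$ for $\alpha\in\Omega_1$. For $2\le j\le k$, $\phi_j:\Omega_1\to\Omega_j$ witnesses a permutation isomorphism from $G_1$ to $G_j$. $B=\langle N_{\mathrm{Sym}(\Omega_i)}(G_i):1\le i\le k\rangle$, $K=\langle\overline{\phi_j}:2\le j\le k\rangle$. $g_1$ generates $G_1$, $g_j=g_1^{\overline{\phi_j}}$, and $\gamma:G\to\mathbb{F}_p^k$ is the isomorphism $\gamma(g_1^{r_1}\cdots g_k^{r_k})=(r_1,\dots,r_k)$ (elements of $\mathbb{F}_p$ identified with $0,\dots,p-1$). For a code $C\le\mathbb{F}_p^k$, $C^\perp=\{v: v\cdot c=0 \ \forall c\in C\}$ with the standard dot product. *)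

(* Defs.v *)
From HB Require Import structures.
From mathcomp Require Import all_boot all_order all_algebra all_fingroup all_solvable.
Set Implicit Arguments. Unset Strict Implicit. Unset Printing Implicit Defensive.
Import GRing.Theory.
Local Open Scope group_scope.

(* Permutations of 'I_n; mathcomp's product (s * t) x = t (s x) is the
   right-action convention of the paper, and x ^ y = y^-1 * x * y. *)

Section Defs.
Variables (n k : nat).
Notation T := 'I_n.
Implicit Types (H : {group {perm T}}) (Om : 'I_k.+1 -> {set T}).

(* Om lists (without repetition) exactly the H-orbits on T.
   Index ord0 plays the role of Omega_1. *)
Definition orbits_listing H Om : Prop :=
  injective Om /\ [set Om i | i : 'I_k.+1] = orbit 'P H @: [set: T].

Definition Gi H Om (i : 'I_k.+1) : {group {perm T}} :=
  (restr_perm (Om i) @* H)%G.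

Definition Gprod H Om : {set {perm T}} := << \bigcup_(i < k.+1) Gi H Om i >>.

(* t is \overline{phi} for some bijection phi : A -> B, namely phi = t|_A:
   t is an involution of Sym(A u B) mapping A onto B. *)
Definition is_bar (A B : {set T}) (t : {perm T}) : Prop :=
  [/\ (t ^+ 2 = 1)%g, perm_on (A :|: B) t & t @: A = B].

Definition witnesses_iso (A : {set T}) (t : {perm T}) (G1 Gj : {set {perm T}}) : Prop :=
  exists psi : {perm T} -> {perm T},
    [/\ {in G1 &, {morph psi : x y / (x * y)%g}},
        {in G1 &, injective psi}, psi @: G1 = Gj &
        forall g a, g \in G1 -> a \in A -> t (g a) = psi g (t a)].

Definition Bgrp H Om : {set {perm T}} :=
  << \bigcup_(i < k.+1) 'N_(perm.Sym (Om i))(Gi H Om i) >>.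

Definition Kgrp (phibar : 'I_k.+1 -> {perm T}) : {set {perm T}} :=
  << [set phibar j | j in [set j : 'I_k.+1 | j != ord0]] >>.

Definition gen (phibar : 'I_k.+1 -> {perm T}) (g1 : {perm T}) (j : 'I_k.+1) : {perm T} :=
  if j == ord0 then g1 else (g1 ^ phibar j)%g.

(* gamma : G -> F_p^k,  gamma(g_1^{r_1} ... g_k^{r_k}) = (r_1,...,r_k),
   with F_p elements identified with 0..p-1. *)
Definition gamma (p : nat) (phibar : 'I_k.+1 -> {perm T}) (g1 : {perm T})
    (x : {perm T}) : 'rV['F_p]_k.+1 :=
  odflt 0%R [pick r : 'rV['F_p]_k.+1 |
     x == (\prod_(i < k.+1) (gen phibar g1 i ^+ (r ord0 i : nat)))%g].

Definition dotp (p : nat) (u v : 'rV['F_p]_k.+1) : 'F_p :=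
  (\sum_(i < k.+1) u ord0 i * v ord0 i)%R.

Definition perp (p : nat) (C : {set 'rV['F_p]_k.+1}) : {set 'rV['F_p]_k.+1} :=
  [set v | [forall c in C, dotp v c == 0%R]].

Definition Hperp (p : nat) H Om (phibar : 'I_k.+1 -> {perm T}) (g1 : {perm T})
    : {set {perm T}} :=
  Gprod H Om :&: gamma p phibar g1 @^-1: perp (gamma p phibar g1 @: (H : {set _})).

End Defs.

(* Main.v *)
Require Import Defs.
From HB Require Import structures.
From mathcomp Require Import all_boot all_order all_algebra all_fingroup all_solvable.
Set Implicit Arguments. Unset Strict Implicit. Unset Printing Implicit Defensive.
Import GRing.Theory.
Local Open Scope group_scope.

Local Open Scope ring_scope.
Lemma perpperp (F : finFieldType) m (C : {set 'rV[F]_m}) :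
  0 \in C -> {in C &, forall u v, u + v \in C} -> (forall a, {in C, forall u, a *: u \in C}) ->
  forall w : 'rV_m, (forall u : 'rV_m, (forall c : 'rV_m, c \in C -> (u *m c^T) 0 0 = 0) -> (w *m u^T) 0 0 = 0) -> w \in C.
Proof.
move=> C0 CD CZ w Hw.
pose A : 'M[F]_(#|C|, m) := \matrix_(i < #|C|) (enum_val i : 'rV_m).
have rowA i : row i A = enum_val i.
  by rewrite rowK.
pose Kp := kermx A^T.
have KA : Kp *m A^T = 0 by apply: mulmx_ker.
have wK : w *m Kp^T = 0.
  apply/rowP => j; rewrite [RHS]mxE.
  have <- : (w *m (row j Kp)^T) 0 0 = (w *m Kp^T) 0 j.
    by rewrite !mxE; apply: eq_bigr => l _; rewrite !mxE.
  apply: Hw => c Cc.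
  have -> : c = row (enum_rank_in Cc c) A by rewrite rowA enum_rankK_in.
  have <- : (Kp *m A^T) j (enum_rank_in Cc c) = (row j Kp *m (row (enum_rank_in Cc c) A)^T) 0 0 by rewrite !mxE; apply: eq_bigr => l _; rewrite !mxE.
  by rewrite KA mxE.
have AK : (A <= kermx Kp^T)%MS by rewrite sub_kermx -[A in A *m _]trmxK -trmx_mul KA trmx0.
have rk : \rank (kermx Kp^T) = \rank A.
  rewrite mxrank_ker mxrank_tr mxrank_ker mxrank_tr subKn //; exact: rank_leq_col.
have KsubA : (kermx Kp^T <= A)%MS.
  by have := mxrank_leqif_sup AK; rewrite rk => -[_ <-].
have : (w <= A)%MS by apply: submx_trans KsubA; rewrite sub_kermx wK.
case/submxP => D ->.
rewrite mulmx_sum_row.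
apply: (big_ind (fun x => x \in C)) => //.
by move=> i _; rewrite rowA; apply: CZ; apply: enum_valP.
Qed.
Local Close Scope ring_scope.

Section Main.
Variables (p n k : nat) (H : {group {perm 'I_n}})
    (Om : 'I_k.+1 -> {set 'I_n}) (phibar : 'I_k.+1 -> {perm 'I_n})
    (g1 : {perm 'I_n}).
Hypothesis pr : prime p.
Hypothesis Hol : orbits_listing H Om.
Hypothesis HG : forall i, cyclic (Gi H Om i) /\ #|Gi H Om i| = p.
Hypothesis Hphi : forall j, j != ord0 ->
     is_bar (Om ord0) (Om j) (phibar j) /\
     witnesses_iso (Om ord0) (phibar j) (Gi H Om ord0) (Gi H Om j).
Hypothesis Hg1 : (Gi H Om ord0 :=: <[g1]>)%g.

Local Notation gj := (gen phibar g1).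
Implicit Types (x y z h b c : {perm 'I_n}).

Lemma Om_orbit j : exists a0 : 'I_n, Om j = orbit 'P%act H a0.
Proof.
case: Hol => _ E.
have : Om j \in [set Om i | i : 'I_k.+1] by apply: imset_f.
by rewrite E => /imsetP [x _ ->]; exists x.
Qed.

Lemma Om_cover a : exists j, a \in Om j.
Proof.
case: Hol => _ E.
have : orbit 'P%act H a \in [set Om i | i : 'I_k.+1] by rewrite E; apply: imset_f.
by case/imsetP => j _ Ej; exists j; rewrite -Ej orbit_refl.
Qed.

Lemma Om_disj i j a : a \in Om i -> a \in Om j -> i = j.
Proof.
case: Hol => inj _.
have [x Ex] := Om_orbit i; have [y Ey] := Om_orbit j.
rewrite Ex Ey => /orbit_eqP Ha /orbit_eqP Hb.
by apply: inj; rewrite Ex Ey -Ha -Hb.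
Qed.

Lemma H_acts j : H \subset 'N(Om j | 'P).
Proof.
have [x ->] := Om_orbit j.
by apply: acts_orbit; apply: subsetT.
Qed.

Lemma H_stab j h a : h \in H -> a \in Om j -> h a \in Om j.
Proof.
move=> Hh Ha.
have [x Ex] := Om_orbit j.
move: Ha; rewrite Ex => /orbit_eqP <-.
exact: (mem_orbit 'P%act a Hh).
Qed.

Lemma Gi_on j x : x \in Gi H Om j -> perm_on (Om j) x.
Proof.
by case/morphimP => z _ _ ->; apply: restr_perm_on.
Qed.

Lemma restr_in_Gi j h : h \in H -> restr_perm (Om j) h \in Gi H Om j.
Proof.
move=> Hh; apply/morphimP; exists h => //.
by apply: (subsetP (H_acts j)).
Qed.

Lemma restrE j h a : h \in H -> a \in Om j -> restr_perm (Om j) h a = h a.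
Proof.
move=> Hh Ha; apply: restr_permE => //.
by apply: (subsetP (H_acts j)).
Qed.

Lemma permJE (x t : {perm 'I_n}) a : (x ^ t)%g a = t (x (t^-1 a))%g.
Proof. by rewrite conjgE !permM. Qed.

Lemma bar_facts j : j != ord0 ->
  [/\ (phibar j)^-1 = phibar j, (forall a, phibar j (phibar j a) = a),
      (forall a, a \in Om ord0 -> phibar j a \in Om j),
      (forall a, a \in Om j -> phibar j a \in Om ord0) &
      (forall a, a \notin Om ord0 -> a \notin Om j -> phibar j a = a)]%g.
Proof.
move=> nj; have [[t2 ton tim] _] := Hphi nj.
set t := phibar j in t2 ton tim *.
have tt2 : t * t = 1 by rewrite -t2 expgS expg1.
have tt a : t (t a) = a by rewrite -permM tt2 perm1.
have t0 a : a \in Om ord0 -> t a \in Om j by move=> Ha; rewrite -tim imset_f.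
split => //.
- by apply/eqP; rewrite eq_invg_mul tt2.
- by move=> b; rewrite -tim => /imsetP [a Ha ->]; rewrite tt.
- by move=> a H0 Hj; apply: (out_perm ton); rewrite inE negb_or H0 Hj.
Qed.

Lemma gj_Gi j : Gi H Om j = <[gj j]>%g :> {set _}.
Proof.
rewrite /gen; case: eqP => [->|/eqP nj]; first exact: Hg1.
have [[t2 ton tim] [psi [pM pI pim pE]]] := Hphi nj.
have [tV tt t0 tj tout] := bar_facts nj.
rewrite -pim cycleJ -Hg1.
apply: eq_in_imset => g Hg.
have Hpg : psi g \in Gi H Om j by rewrite -pim imset_f.
apply/permP => b; rewrite permJE tV.
case Hb: (b \in Om j).
- have := Hb; rewrite -tim => /imsetP [a Ha ->].
  by rewrite pE // tt.
- rewrite (out_perm (Gi_on Hpg)) ?Hb //.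
  have Htb : phibar j b \notin Om ord0.
    by apply/negP => /t0; rewrite tt Hb.
  by rewrite (out_perm (Gi_on Hg)) // tt.
Qed.

Lemma gj_order j : #[gj j]%g = p.
Proof. by rewrite /order -gj_Gi; case: (HG j). Qed.

Lemma gjX_on j m : perm_on (Om j) (gj j ^+ m)%g.
Proof. by apply: Gi_on; rewrite gj_Gi; apply: groupX; apply: cycle_id. Qed.

Lemma gjX_in j m a : a \in Om j -> (gj j ^+ m)%g a \in Om j.
Proof. by move=> Ha; rewrite (perm_closed _ (gjX_on j m)). Qed.


Lemma valFp m : ((m%:R : 'F_p)%R : nat) = m %% p.
Proof. by rewrite Zp_nat /= Fp_cast. Qed.

Lemma FpK (a : 'F_p) : ((a : nat)%:R : 'F_p)%R = a.
Proof.
apply: val_inj; rewrite /= valFp modn_small //.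
by apply: (leq_trans (ltn_ord a)); rewrite Fp_cast.
Qed.

Lemma expFp j m : gj j ^+ ((m%:R : 'F_p)%R : nat) = gj j ^+ m.
Proof. by rewrite valFp -(gj_order j) expg_mod_order. Qed.

Definition Rep (x : {perm 'I_n}) (r : 'rV['F_p]_k.+1) :=
  forall j a, a \in Om j -> x a = (gj j ^+ (r ord0 j : nat)) a.

Lemma RepN (x : {perm 'I_n}) (m : 'I_k.+1 -> nat) :
  (forall j a, a \in Om j -> x a = (gj j ^+ m j) a) -> Rep x (\row_j (m j)%:R)%R.
Proof. by move=> h j a Ha; rewrite mxE expFp; apply: h. Qed.

Lemma Rep_perm (x y : {perm 'I_n}) r : Rep x r -> Rep y r -> x = y.
Proof.
move=> hx hy; apply/permP => a.
have [j Ha] := Om_cover a.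
by rewrite (hx j) // (hy j).
Qed.

Lemma Rep_vec (x : {perm 'I_n}) r s : Rep x r -> Rep x s -> r = s.
Proof.
move=> hr hs; apply/rowP => j.
have E : gj j ^+ (r ord0 j : nat) = gj j ^+ (s ord0 j : nat).
  apply/permP => a; case Ha: (a \in Om j).
    by rewrite -(hr j) // -(hs j).
  by rewrite !(out_perm (gjX_on _ _)) ?Ha.
move/eqP: E; rewrite eq_expg_mod_order gj_order.
have lt (b : 'F_p) : (b : nat) < p by apply: (leq_trans (ltn_ord b)); rewrite Fp_cast.
by rewrite !modn_small // => /eqP E; apply: val_inj.
Qed.

Lemma prod_eval (s : seq 'I_k.+1) (f : 'I_k.+1 -> {perm 'I_n}) :
  uniq s -> (forall i, perm_on (Om i) (f i)) ->
  forall j a, a \in Om j -> (\prod_(i <- s) f i) a = if j \in s then f j a else a.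
Proof.
move=> us fon j a Ha; elim: s us a Ha => [|i s IH] /=; first by move=> *; rewrite big_nil perm1.
case/andP => nis us a Ha.
rewrite big_cons permM in_cons.
case: (eqVneq j i) => [ji|nji] /=.
- subst i; rewrite IH //; last by rewrite (perm_closed _ (fon j)).
  by rewrite (negbTE nis).
- rewrite (out_perm (fon i)); first exact: IH.
  by apply/negP => Hi; move: nji; rewrite (Om_disj Ha Hi) eqxx.
Qed.

Definition Eof (r : 'rV['F_p]_k.+1) : {perm 'I_n} :=
  \prod_(i < k.+1) (gj i ^+ (r ord0 i : nat)).

Lemma Rep_E r : Rep (Eof r) r.
Proof.
move=> j a Ha; rewrite /Eof (prod_eval (index_enum_uniq _) (fun i => gjX_on i _) Ha).
by rewrite mem_index_enum.
Qed.

Lemma gamma_Rep x r : Rep x r -> gamma p phibar g1 x = r.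
Proof.
move=> hr; rewrite /gamma; case: pickP => [r' /eqP Ex | none] /=.
  by apply: (Rep_vec _ hr); rewrite Ex; apply: Rep_E.
by have := none r; rewrite (Rep_perm hr (Rep_E r)) eqxx.
Qed.

Lemma RepM x y r s : Rep x r -> Rep y s -> Rep (x * y) (r + s)%R.
Proof.
move=> hx hy.
have -> : (r + s)%R = (\row_j ((r ord0 j : nat) + (s ord0 j : nat))%:R)%R.
  by apply/rowP => j; rewrite !mxE natrD !FpK.
apply: RepN => j a Ha.
by rewrite permM (hx j) // (hy j) ?gjX_in // expgD permM.
Qed.

Lemma Rep1 : Rep 1 0%R.
Proof.
have -> : (0 : 'rV['F_p]_k.+1)%R = (\row_j (0%N)%:R)%R by apply/rowP => j; rewrite !mxE.
by apply: RepN => j a _; rewrite expg0 perm1.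
Qed.

Lemma RepEx x : (forall j, exists m, forall a, a \in Om j -> x a = (gj j ^+ m) a) ->
  exists r, Rep x r.
Proof.
move=> h.
have h' j : exists m, [forall a in Om j, x a == (gj j ^+ m) a].
  by have [m hm] := h j; exists m; apply/forall_inP => a /hm ->.
exists (\row_j (xchoose (h' j))%:R)%R; apply: RepN => j a Ha.
by have /forall_inP /(_ a Ha) /eqP := xchooseP (h' j).
Qed.

Lemma RepGi j x : x \in Gi H Om j -> exists r, Rep x r.
Proof.
move=> Hx; apply: RepEx => i.
case: (eqVneq i j) => [->|nij].
  by move: Hx; rewrite gj_Gi => /cycleP [m ->]; exists m.
exists 0%N => a Ha; rewrite expg0 perm1 (out_perm (Gi_on Hx)) //.
by apply/negP => Hj; move: nij; rewrite (Om_disj Ha Hj) eqxx.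
Qed.

Lemma RepH h : h \in H -> exists r, Rep h r.
Proof.
move=> Hh; apply: RepEx => j.
have := restr_in_Gi j Hh; rewrite gj_Gi => /cycleP [m Em].
by exists m => a Ha; rewrite -Em restrE.
Qed.

Lemma Gprod_Rep x : (x \in Gprod H Om) <-> exists r, Rep x r.
Proof.
split.
- case/gen_prodgP => N [c Hc ->].
  elim: N c Hc => [|N IH] c Hc; first by exists 0%R; rewrite big_ord0; apply: Rep1.
  rewrite big_ord_recr /=.
  have [r1 h1] := IH (fun i => c (widen_ord (leqnSn N) i)) (fun i => Hc _).
  have /bigcupP [j _ Hj] := Hc ord_max.
  have [r2 h2] := RepGi Hj.
  by exists (r1 + r2)%R; apply: RepM.
- case=> r hr; rewrite (Rep_perm hr (Rep_E r)) /Eof.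
  apply: group_prod => i _; apply: groupX; apply: mem_gen.
  by apply/bigcupP; exists i => //; rewrite gj_Gi cycle_id.
Qed.

Lemma gj0 : gj ord0 = g1.
Proof. by rewrite /gen eqxx. Qed.

Lemma gjJ j : j != ord0 -> gj j = g1 ^ phibar j.
Proof. by move=> nj; rewrite /gen (negbTE nj). Qed.

Definition PB b := exists d : 'I_k.+1 -> 'F_p, (forall j, d j != 0%R) /\ forall x r, Rep x r -> Rep (x ^ b) (\row_j (d j * r ord0 j))%R.

Lemma PB_gen i (s : {perm 'I_n}) : s \in 'N_(perm.Sym (Om i))(Gi H Om i) -> PB s.
Proof.
case/setIP; rewrite inE => son /normP Ns.
have : gj i ^ s \in Gi H Om i by rewrite -Ns memJ_conjg gj_Gi cycle_id.
rewrite gj_Gi => /cycleP [c Ec].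
exists (fun j => if j == i then c%:R else 1)%R; split.
- move=> j; case: (j == i); last by rewrite ?oner_neq0.
  apply/negP => /eqP c0.
  have : gj i ^ s = 1 by rewrite Ec -expFp c0 /= expg0.
  move/eqP; rewrite conjg_eq1 => /eqP g1e.
  have := gj_order i; rewrite g1e order1 => p1.
  by move: pr; rewrite -p1.
- move=> x r hr j a Ha; rewrite permJE mxE.
  case: (eqVneq j i) => [Eji|nji].
  + subst j; rewrite ?eqxx (hr i); last by rewrite (perm_closed _ (perm_onV son)).
    by rewrite -{2}(FpK (r ord0 i)) -natrM expFp expgM -Ec -conjXg permJE.
  + rewrite ?(negbTE nji) mul1r.
    have nai : a \notin Om i by apply/negP => Hi; move: nji; rewrite (Om_disj Ha Hi) eqxx.
    rewrite (out_perm (perm_onV son) nai) (hr j) // (out_perm son) //.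
    by apply/negP => Hi; move: nji; rewrite (Om_disj (gjX_in _ Ha) Hi) eqxx.
Qed.

Lemma PB1 : PB 1.
Proof.
exists (fun _ => 1%R); split => [j|x r hr]; first exact: oner_neq0.
rewrite conjg1; have -> : (\row_j (1 * r ord0 j))%R = r by apply/rowP => j; rewrite !mxE mul1r.
exact: hr.
Qed.

Lemma PBM b1 b2 : PB b1 -> PB b2 -> PB (b1 * b2).
Proof.
case=> [d1 [nz1 h1]] [d2 [nz2 h2]].
exists (fun j => d1 j * d2 j)%R; split => [j|x r hr]; first by rewrite mulf_neq0.
rewrite conjgM.
have -> : (\row_j (d1 j * d2 j * r ord0 j))%R = (\row_j (d2 j * (\row_l (d1 l * r ord0 l))%R ord0 j))%R.
  by apply/rowP => j; rewrite !mxE mulrA [(d1 j * d2 j)%R]mulrC.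
by apply: h2; apply: h1.
Qed.

Lemma PB_B b : b \in Bgrp H Om -> PB b.
Proof.
case/gen_prodgP => N [c Hc ->].
elim: N c Hc => [|N IH] c Hc; first by rewrite big_ord0; apply: PB1.
rewrite big_ord_recr /=; apply: PBM; first exact: IH (fun i => Hc _).
have /bigcupP [j _ Hj] := Hc ord_max.
exact: PB_gen Hj.
Qed.

Lemma PB_inv b (d : 'I_k.+1 -> 'F_p) : (forall j, d j != 0%R) ->
  (forall x r, Rep x r -> Rep (x ^ b) (\row_j (d j * r ord0 j))%R) ->
  forall x r, Rep x r -> Rep (x ^ b^-1) (\row_j ((d j)^-1 * r ord0 j))%R.
Proof.
move=> nz hd x r hr.
set r' := (\row_j ((d j)^-1 * r ord0 j))%R.
have hy := hd _ _ (Rep_E r').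
have E : (\row_j (d j * r' ord0 j))%R = r.
  by apply/rowP => j; rewrite !mxE mulVKf.
rewrite E in hy.
by rewrite -(Rep_perm hy hr) conjgK; apply: Rep_E.
Qed.

Definition PK c := exists sg : {perm 'I_k.+1},
  forall x r, Rep x r -> Rep (x ^ c) (\row_j r ord0 (sg j))%R.

Lemma PK_gen j : j != ord0 -> PK (phibar j).
Proof.
move=> nj; have [tV tt t0 tj tout] := bar_facts nj.
exists (tperm ord0 j) => x r hr i a Ha; rewrite permJE tV mxE.
case: (eqVneq i ord0) => [Ei|ni0].
- by subst i; rewrite tpermL (hr j) ?t0 // gj0 (gjJ nj) -conjXg permJE tV !tt.
case: (eqVneq i j) => [Eij|nij].
- by subst i; rewrite tpermR (hr ord0) ?tj // gj0 (gjJ nj) -conjXg permJE tV.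
have na0 : a \notin Om ord0 by apply/negP => Hi; move: ni0; rewrite (Om_disj Ha Hi) eqxx.
have naj : a \notin Om j by apply/negP => Hi; move: nij; rewrite (Om_disj Ha Hi) eqxx.
rewrite tpermD 1?eq_sym // tout // (hr i) // tout //.
  by apply/negP => Hi; move: ni0; rewrite (Om_disj (gjX_in _ Ha) Hi) eqxx.
by apply/negP => Hi; move: nij; rewrite (Om_disj (gjX_in _ Ha) Hi) eqxx.
Qed.

Lemma PK1 : PK 1.
Proof.
exists 1 => x r hr; rewrite conjg1.
have -> : (\row_j r ord0 ((1%g : {perm 'I_k.+1}) j))%R = r by apply/rowP => j; rewrite !mxE perm1.
exact: hr.
Qed.

Lemma PKM c1 c2 : PK c1 -> PK c2 -> PK (c1 * c2).
Proof.
case=> [s1 h1] [s2 h2].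
exists (s2 * s1) => x r hr; rewrite conjgM.
have -> : (\row_j r ord0 ((s2 * s1)%g j))%R = (\row_j (\row_l r ord0 (s1 l))%R ord0 (s2 j))%R.
  by apply/rowP => j; rewrite !mxE permM.
by apply: h2; apply: h1.
Qed.

Lemma PK_K c : c \in Kgrp phibar -> PK c.
Proof.
case/gen_prodgP => N [f Hf ->].
elim: N f Hf => [|N IH] f Hf; first by rewrite big_ord0; apply: PK1.
rewrite big_ord_recr /=; apply: PKM; first exact: IH (fun i => Hf _).
have /imsetP [j Hj ->] := Hf ord_max.
by apply: PK_gen; move: Hj; rewrite inE.
Qed.

Lemma dot_inv b c : b \in Bgrp H Om -> c \in Kgrp phibar ->
  exists f1 f2 : 'rV['F_p]_k.+1 -> 'rV['F_p]_k.+1,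
   [/\ forall x r, Rep x r -> Rep (x ^ (b * c)) (f1 r),
       forall x r, Rep x r -> Rep (x ^ (b^-1 * c)) (f2 r) &
       forall r s, dotp (f1 r) (f2 s) = dotp r s].
Proof.
move=> Hb Hc.
have [d [nz hd]] := PB_B Hb.
have hdi := PB_inv nz hd.
have [sg hs] := PK_K Hc.
exists (fun r => \row_j (d (sg j) * r ord0 (sg j)))%R.
exists (fun r => \row_j ((d (sg j))^-1 * r ord0 (sg j)))%R.
split.
- move=> x r hr; rewrite conjgM.
  have := hs _ _ (hd _ _ hr).
  have -> : (\row_j (\row_l (d l * r ord0 l))%R ord0 (sg j))%R =
            (\row_j (d (sg j) * r ord0 (sg j)))%R by apply/rowP => j; rewrite !mxE.
  done.
- move=> x r hr; rewrite conjgM.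
  have := hs _ _ (hdi _ _ hr).
  have -> : (\row_j (\row_l ((d l)^-1 * r ord0 l))%R ord0 (sg j))%R =
            (\row_j ((d (sg j))^-1 * r ord0 (sg j)))%R by apply/rowP => j; rewrite !mxE.
  done.
- move=> r s; rewrite /dotp [RHS](reindex_inj (@perm_inj _ sg)) /=.
  apply: eq_bigr => j _; rewrite !mxE.
  by rewrite mulrACA mulfV // mul1r.
Qed.

Lemma dotE (u v : 'rV['F_p]_k.+1) : (u *m v^T)%R ord0 ord0 = dotp u v.
Proof. by rewrite mxE /dotp; apply: eq_bigr => i _; rewrite mxE. Qed.

Lemma dotpC (u v : 'rV['F_p]_k.+1) : dotp u v = dotp v u.
Proof. by rewrite /dotp; apply: eq_bigr => i _; rewrite mulrC. Qed.

Local Notation gam := (gamma p phibar g1).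

Lemma gH h : h \in H -> Rep h (gam h).
Proof. by move=> Hh; have [r hr] := RepH Hh; rewrite (gamma_Rep hr). Qed.

Lemma gG x : x \in Gprod H Om -> Rep x (gam x).
Proof. by move=> /Gprod_Rep [r hr]; rewrite (gamma_Rep hr). Qed.

Lemma HperpP v : v \in Hperp p H Om phibar g1 <->
  v \in Gprod H Om /\ forall h, h \in H -> dotp (gam v) (gam h) = 0%R.
Proof.
rewrite /Hperp /perp !inE; split.
- case/andP => vG /forall_inP hp; split => // h Hh; apply/eqP; apply: hp.
  exact: imset_f.
- case=> vG hp; rewrite vG /=; apply/forall_inP => _ /imsetP [h Hh ->].
  by apply/eqP; apply: hp.
Qed.

Lemma RepX h m : Rep h (gam h) -> Rep (h ^+ m) (gam h *+ m)%R.
Proof.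
move=> hr; elim: m => [|m IH]; first by rewrite expg0 mulr0n; apply: Rep1.
by rewrite expgS mulrS; apply: RepM.
Qed.

Lemma main b c : b \in Bgrp H Om -> c \in Kgrp phibar ->
  ((b * c) \in 'N(H)) = ((b^-1 * c) \in 'N(Hperp p H Om phibar g1)).
Proof.
move=> Hb Hc; have [f1 [f2 [R1 R2 D]]] := dot_inv Hb Hc.
apply/idP/idP.
- move/normP => NH; apply/normP/eqP; rewrite eqEcard cardJg leqnn andbT.
  apply/subsetP => _ /imsetP [v Hv ->].
  case/HperpP: Hv => vG vperp; apply/HperpP; split.
    by apply/Gprod_Rep; exists (f2 (gam v)); apply: R2 (gG vG).
  move=> h Hh; rewrite (gamma_Rep (R2 _ _ (gG vG))).
  have Hh' : h ^ (b * c)^-1 \in H by rewrite -mem_conjg NH.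
  have Eh : h = (h ^ (b * c)^-1) ^ (b * c) by rewrite conjgKV.
  rewrite Eh (gamma_Rep (R1 _ _ (gH Hh'))) dotpC D dotpC.
  exact: vperp.
- move/normP => NP; apply/normP/eqP; rewrite eqEcard cardJg leqnn andbT.
  apply/subsetP => _ /imsetP [h Hh ->].
  have hr := R1 _ _ (gH Hh).
  have : f1 (gam h) \in gam @: H.
    apply: perpperp.
    - by rewrite -(gamma_Rep Rep1); apply: imset_f; apply: group1.
    - move=> _ _ /imsetP [h1 H1 ->] /imsetP [h2 H2 ->].
      rewrite -(gamma_Rep (RepM (gH H1) (gH H2))); apply: imset_f.
      exact: groupM.
    - move=> a _ /imsetP [h1 H1 ->]; rewrite -[a]FpK scaler_nat.
      rewrite -(gamma_Rep (RepX _ (gH H1))); apply: imset_f.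
      exact: groupX.
    - move=> u Hu.
      have vP : Eof u \in Hperp p H Om phibar g1.
        apply/HperpP; split; first by apply/Gprod_Rep; exists u; apply: Rep_E.
        move=> h1 H1; rewrite (gamma_Rep (Rep_E u)) -dotE; apply: Hu.
        exact: imset_f.
      have : Eof u ^ (b^-1 * c)^-1 \in Hperp p H Om phibar g1 by rewrite -mem_conjg NP.
      set v' := Eof u ^ (b^-1 * c)^-1 => v'P.
      have Ev : Eof u = v' ^ (b^-1 * c) by rewrite conjgKV.
      case/HperpP: v'P => v'G v'perp.
      have hu : u = f2 (gam v').
        by apply: (Rep_vec (Rep_E u)); rewrite Ev; apply: R2 (gG v'G).
      by rewrite dotE hu D dotpC; apply: v'perp.
  case/imsetP => h'' Hh'' E.
  have hr' : Rep (h ^ (b * c)) (gam h'') by rewrite -E.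
  by rewrite (Rep_perm hr' (gH Hh'')).
Qed.

End Main.

Theorem lemma4p1 (p n k : nat) (H : {group {perm 'I_n}})
    (Om : 'I_k.+1 -> {set 'I_n}) (phibar : 'I_k.+1 -> {perm 'I_n})
    (g1 b kappa : {perm 'I_n}) :
  prime p ->
  orbits_listing H Om ->
  (forall i, #|Om i| = p) ->
  (forall i, cyclic (Gi H Om i) /\ #|Gi H Om i| = p) ->
  (forall j, j != ord0 ->
     is_bar (Om ord0) (Om j) (phibar j) /\
     witnesses_iso (Om ord0) (phibar j) (Gi H Om ord0) (Gi H Om j)) ->
  (Gi H Om ord0 :=: <[g1]>)%g ->
  b \in Bgrp H Om ->
  kappa \in Kgrp phibar ->
  ((b * kappa)%g \in 'N(H)%g) = ((b^-1 * kappa)%g \in 'N(Hperp p H Om phibar g1)%g).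
Proof.
move=> pr Hol Hcard HG Hphi Hg1 Hb Hk.
exact: (main pr Hol HG Hphi Hg1 Hb Hk).
Qed.
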